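(* Let $\operatorname{Cs}(4)=\{x,y,z\}$ be the quandle with multiplication $xx=x$, $yy=y$, $zz=z$, $xy=x$, $xz=y$, $yx=y$, $yz=x$, $zx=z$, $zy=z$. Then the set of non-zero maximal quandles in $\mathbb{Z}[\operatorname{Cs}(4)]$ is $\operatorname{mq}(\mathbb{Z}[\operatorname{Cs}(4)])=\{N_1,N_2\}$, where $$N_1=\big\{z,~(1-\beta)x+\beta y~|~\beta\in\mathbb{Z}\big\},\qquad N_2=\big\{\alpha x+\alpha y+(1-2\alpha)z~|~\alpha\in\mathbb{Z}\big\}.$$
   Context: A quandle is a non-empty set with a binary operation $(u,v)\mapsto uv$ such that $uu=u$; for all $u,v$ there is a unique $w$ with $u=wv$; and $(uv)w=(uw)(vw)$. For a quandle $Q$, the quandle ring $\mathbb{Z}[Q]$ is the free abelian group with basis $Q$, with multiplication $\big(\sum_i\alpha_i q_i\big)\big(\sum_j\beta_j q_j\big)=\sum_{i,j}\alpha_i\beta_j (q_iq_j)$. A quandle in $\mathbb{Z}[Q]$ is a subset closed under the ring multiplication which is a quandle under the restricted multiplication. $\operatorname{mq}(\mathbb{Z}[Q])$ is the set of all quandles in $\mathbb{Z}[Q]$ different from $\{0\}$ that are maximal with respect to inclusion among quandles in $\mathbb{Z}[Q]$. *)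

(* Defs.v *)
From mathcomp Require Import all_boot all_order all_algebra.
Set Implicit Arguments. Unset Strict Implicit. Unset Printing Implicit Defensive.
Import GRing.Theory Num.Theory.
Local Open Scope ring_scope.

(* The quandle ring Z[Q] of a finite magma (Q, op): elements are finitely
   supported (here: all) functions Q -> int, i.e. sum_q u(q) q. *)
Notation qring Q := {ffun Q -> int}.

Definition qbasis (Q : finType) (q : Q) : qring Q := [ffun p => ((p == q) : nat)%:Z].

Definition qring_mul (Q : finType) (op : Q -> Q -> Q) (u v : qring Q) : qring Q :=
  [ffun q => \sum_(i : Q) \sum_(j : Q | op i j == q) u i * v j].

Definition quandle_in (Q : finType) (op : Q -> Q -> Q) (S : qring Q -> Prop) : Prop :=
  [/\ (exists u, S u),
      (forall u v, S u -> S v -> S (qring_mul op u v)),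
      (forall u, S u -> qring_mul op u u = u),
      (forall u v, S u -> S v ->
         exists w, S w /\ u = qring_mul op w v /\
           (forall w', S w' -> u = qring_mul op w' v -> w' = w)) &
      (forall u v w, S u -> S v -> S w ->
         qring_mul op (qring_mul op u v) w
         = qring_mul op (qring_mul op u w) (qring_mul op v w))].

Definition mq (Q : finType) (op : Q -> Q -> Q) (S : qring Q -> Prop) : Prop :=
  [/\ quandle_in op S,
      ~ (forall u, S u <-> u = 0) &
      (forall T, quandle_in op T -> (forall u, S u -> T u) -> forall u, T u -> S u)].

Definition cs4_x : 'I_3 := @Ordinal 3 0 isT.
Definition cs4_y : 'I_3 := @Ordinal 3 1 isT.
Definition cs4_z : 'I_3 := @Ordinal 3 2 isT.

Definition cs4_op (i j : 'I_3) : 'I_3 :=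
  match nat_of_ord i, nat_of_ord j with
  | 0, 2 => cs4_y
  | 1, 2 => cs4_x
  | _, _ => i
  end.

Definition N1 (u : qring 'I_3) : Prop :=
  u = qbasis cs4_z \/
  exists beta : int, u = qbasis cs4_x *~ (1 - beta) + qbasis cs4_y *~ beta.

Definition N2 (u : qring 'I_3) : Prop :=
  exists alpha : int,
    u = qbasis cs4_x *~ alpha + qbasis cs4_y *~ alpha + qbasis cs4_z *~ (1 - 2 * alpha).

(* Main.v *)
Require Import Defs.
From mathcomp Require Import all_boot all_order all_algebra.
From mathcomp Require Import zify ring.
Set Implicit Arguments. Unset Strict Implicit. Unset Printing Implicit Defensive.
Import GRing.Theory Num.Theory.
Local Open Scope ring_scope.

Definition mk (a b c : int) : qring 'I_3 :=
  [ffun i : 'I_3 => if val i == 0%N then a else if val i == 1%N then b else c].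

Lemma mulmk a b c d e f :
  qring_mul cs4_op (mk a b c) (mk d e f) =
  mk (a*(d+e)+b*f) (b*(d+e)+a*f) (c*(d+e+f)).
Proof.
apply/ffunP => i; rewrite !ffunE.
rewrite !big_ord_recl !big_ord0 !addr0.
rewrite (big_mkcond (fun j => cs4_op ord0 j == i)).
rewrite (big_mkcond (fun j => cs4_op (lift ord0 ord0) j == i)).
rewrite (big_mkcond (fun j => cs4_op (lift ord0 (lift ord0 ord0)) j == i)).
rewrite !big_ord_recl !big_ord0 /=.
case: i => [[|[|[|i]]] Hi] //=; rewrite !ffunE /=; ring.
Qed.

Lemma mk_eta (u : qring 'I_3) : u = mk (u cs4_x) (u cs4_y) (u cs4_z).
Proof.
apply/ffunP => i; rewrite !ffunE.
case: i => [[|[|[|i]]] Hi] //=; congr (u _); apply: val_inj => //.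
Qed.

Lemma mk_inj a b c a' b' c' : mk a b c = mk a' b' c' -> [/\ a = a', b = b' & c = c'].
Proof.
move=> H; split.
- by have := congr1 (fun f : qring 'I_3 => f cs4_x) H; rewrite !ffunE.
- by have := congr1 (fun f : qring 'I_3 => f cs4_y) H; rewrite !ffunE.
- by have := congr1 (fun f : qring 'I_3 => f cs4_z) H; rewrite !ffunE.
Qed.

Lemma mk0 : (0 : qring 'I_3) = mk 0 0 0.
Proof. by apply/ffunP => i; rewrite !ffunE; case: i => [[|[|[|i]]] Hi]. Qed.

Lemma qbz : qbasis cs4_z = mk 0 0 1.
Proof. by apply/ffunP => i; rewrite !ffunE; case: i => [[|[|[|i]]] Hi]. Qed.

Lemma ffunMzE (f : qring 'I_3) (n : int) x : (f *~ n) x = f x *~ n.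
Proof. by case: n => n /=; rewrite ?ffunE ffunMnE. Qed.

Lemma qbxy p q : qbasis cs4_x *~ p + qbasis cs4_y *~ q = mk p q 0.
Proof.
apply/ffunP => i; rewrite !ffunE !ffunMzE !ffunE; case: i => [[|[|[|i]]] Hi] //=; lia.
Qed.
Lemma qbxyz p q r : qbasis cs4_x *~ p + qbasis cs4_y *~ q + qbasis cs4_z *~ r = mk p q r.
Proof.
apply/ffunP => i; rewrite !ffunE !ffunMzE !ffunE; case: i => [[|[|[|i]]] Hi] //=; lia.
Qed.

Notation mul := (qring_mul cs4_op).

Lemma N1mk u : N1 u <-> u = mk 0 0 1 \/ exists b, u = mk (1 - b) b 0.
Proof. by rewrite /N1 qbz; split; case=> [->|[b ->]]; [left|right; exists b; rewrite qbxy|left|right; exists b; rewrite qbxy]. Qed.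

Lemma N2mk u : N2 u <-> exists a, u = mk a a (1 - 2 * a).
Proof. by rewrite /N2; split; case=> a ->; exists a; rewrite qbxyz. Qed.

Lemma idem_class u : mul u u = u ->
  u = mk 0 0 0 \/ u = mk 0 0 1 \/ (exists b, u = mk (1 - b) b 0) \/
  exists a, u = mk a a (1 - 2 * a).
Proof.
rewrite (mk_eta u); move: (u cs4_x) (u cs4_y) (u cs4_z) => a b c.
rewrite mulmk => /mk_inj [h1 h2 h3].
have [c0|cn0] := eqVneq c 0.
  subst c.
  have [s1|sn1] := eqVneq (a + b) 1.
    by right; right; left; exists b; congr mk; lia.
  have ha : a * (a + b - 1) = 0 by nia.
  have hb : b * (a + b - 1) = 0 by nia.
  have sn1' : a + b - 1 != 0 by apply/eqP; lia.
  move/eqP: ha; rewrite mulf_eq0 (negbTE sn1') orbF => /eqP ->.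
  move/eqP: hb; rewrite mulf_eq0 (negbTE sn1') orbF => /eqP ->.
  by left.
have hc : c * (a + b + c - 1) = 0 by nia.
move/eqP: hc; rewrite mulf_eq0 (negbTE cn0) /= => /eqP hs.
have hd : (a - b) * (2 * c) = 0 by nia.
move/eqP: hd; rewrite mulf_eq0 => /orP [/eqP hab|/eqP h2c]; last by lia.
by right; right; right; exists a; congr mk; lia.
Qed.

Lemma descent_step a b b' : a != 0 ->
  mk (1 - b) b 0 = mul (mk (1 - b') b' 0) (mk a a (1 - 2 * a)) ->
  (2 * b' - 1) * (2 * b' - 1) < (2 * b - 1) * (2 * b - 1).
Proof.
move=> an0; rewrite mulmk => /mk_inj [h1 h2 _].
have ht : 2 * b - 1 = (4 * a - 1) * (2 * b' - 1) by nia.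
rewrite ht.
have m2 : 9 <= (4 * a - 1) * (4 * a - 1).
  have : (1 <= a) \/ (a <= -1) by lia.
  case=> h; nia.
have t1 : 1 <= (2 * b' - 1) * (2 * b' - 1).
  have : (1 <= 2 * b' - 1) \/ (2 * b' - 1 <= -1) by lia.
  case=> h; nia.
nia.
Qed.

Lemma quandle_of (P : qring 'I_3 -> Prop) :
  (exists u, P u) -> (forall u v, P u -> P v -> P (mul u v)) ->
  (forall u, P u -> mul u u = u) ->
  (forall u v, P u -> P v -> mul (mul u v) v = u) ->
  (forall u v w, P u -> P v -> P w -> mul (mul u v) w = mul (mul u w) (mul v w)) ->
  quandle_in cs4_op P.
Proof.
move=> ne cl id iv ds; split=> //.
move=> u v Pu Pv; exists (mul u v); split; first exact: cl.
split; first by rewrite iv.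
by move=> w' Pw' ->; rewrite iv.
Qed.

Lemma N1_quandle : quandle_in cs4_op N1.
Proof.
apply: quandle_of.
- by exists (mk 0 0 1); apply/N1mk; left.
- move=> u v /N1mk [->|[b ->]] /N1mk [->|[c ->]]; apply/N1mk; rewrite mulmk.
  + by left; congr mk; ring.
  + by left; congr mk; ring.
  + by right; exists (1 - b); congr mk; ring.
  + by right; exists b; congr mk; ring.
- by move=> u /N1mk [->|[b ->]]; rewrite mulmk; congr mk; ring.
- by move=> u v /N1mk [->|[b ->]] /N1mk [->|[c ->]]; rewrite !mulmk; congr mk; ring.
- by move=> u v w /N1mk [->|[b ->]] /N1mk [->|[c ->]] /N1mk [->|[d ->]];
     rewrite !mulmk; congr mk; ring.
Qed.

Lemma N2_quandle : quandle_in cs4_op N2.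
Proof.
apply: quandle_of.
- by exists (mk 0 0 1); apply/N2mk; exists 0; congr mk; ring.
- move=> u v /N2mk [a ->] /N2mk [c ->]; apply/N2mk; rewrite mulmk.
  by exists a; congr mk; ring.
- by move=> u /N2mk [a ->]; rewrite mulmk; congr mk; ring.
- by move=> u v /N2mk [a ->] /N2mk [c ->]; rewrite !mulmk; congr mk; ring.
- by move=> u v w /N2mk [a ->] /N2mk [c ->] /N2mk [d ->]; rewrite !mulmk; congr mk; ring.
Qed.

From Stdlib Require Import Classical.

Lemma key (T : qring 'I_3 -> Prop) : quandle_in cs4_op T ->
  (exists u, T u /\ u != 0) ->
  (forall u, T u -> N1 u) \/ (forall u, T u -> N2 u).
Proof.
case=> [_ cl id dv _] [u0 [Tu0 u0n]].
have no0 : forall u, T u -> u <> mk 0 0 0.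
  move=> u Tu eu; have [w [_ [e _]]] := dv u0 u Tu0 Tu.
  move: e; rewrite eu (mk_eta w) mulmk => e.
  apply: (negP u0n); rewrite e mk0; apply/eqP; congr mk; ring.
have cls : forall u, T u -> u = mk 0 0 1 \/ (exists b, u = mk (1 - b) b 0)
    \/ exists a, u = mk a a (1 - 2 * a).
  move=> u Tu; case: (idem_class (id u Tu)) => [/(no0 u Tu)//|[->|]]; auto.
have noboth : forall b a, T (mk (1 - b) b 0) -> T (mk a a (1 - 2 * a)) -> a = 0.
  move=> b a Tp Tq; apply/eqP; apply/negPn/negP => an0.
  suff H : forall n : nat, forall b, T (mk (1 - b) b 0) ->
      (2 * b - 1) * (2 * b - 1) <= n%:Z -> False.
    apply: (H (absz ((2 * b - 1) * (2 * b - 1))) b Tp); lia.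
  elim=> [|n IH] b' Tp' hle.
    have : (1 <= 2 * b' - 1) \/ (2 * b' - 1 <= -1) by lia.
    case=> h; nia.
  have [w [Tw [e _]]] := dv _ _ Tp' Tq.
  case: (cls w Tw) => [ew|[[b'' ew]|[a' ew]]]; rewrite ew in e Tw.
  - by move: e; rewrite mulmk => /mk_inj [_ _ h]; nia.
  - apply: (IH b'') => //; have := descent_step an0 e; lia.
  - by move: e; rewrite mulmk => /mk_inj [_ _ h]; nia.
case: (classic (exists b, T (mk (1 - b) b 0))) => [[b Tb]|nob].
  left=> u Tu; apply/N1mk.
  case: (cls u Tu) => [eu|[[b' eu]|[a eu]]]; rewrite eu in Tu *.
  - by left.
  - by right; exists b'.
  - by rewrite (noboth b a Tb Tu); left; congr mk; ring.
right=> u Tu; apply/N2mk.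
case: (cls u Tu) => [eu|[[b' eu]|[a eu]]]; rewrite eu in Tu *.
- by exists 0; congr mk; ring.
- by case: nob; exists b'.
- by exists a.
Qed.

From Stdlib Require Import FunctionalExtensionality PropExtensionality.

Lemma mul0r' w : mul w 0 = 0.
Proof. by rewrite mk0 (mk_eta w) mulmk; congr mk; ring. Qed.

Lemma mq_N1 : mq cs4_op N1.
Proof.
have z1 : N1 (mk 0 0 1) by apply/N1mk; left.
have x1 : N1 (mk 1 0 0) by apply/N1mk; right; exists 0; congr mk; ring.
split; first exact: N1_quandle.
  move/(_ (mk 0 0 1)) => [h _]; move: (h z1); rewrite mk0 => /mk_inj [_ _]; lia.
move=> T qT sub u Tu.
have nz : exists u, T u /\ u != 0.
  exists (mk 0 0 1); split; first exact: sub.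
  by apply/eqP; rewrite mk0 => /mk_inj [_ _]; lia.
case: (key qT nz) => [H1|H2]; first exact: H1.
by case/N2mk: (H2 _ (sub _ x1)) => a /mk_inj [] *; lia.
Qed.

Lemma mq_N2 : mq cs4_op N2.
Proof.
have q1 : N2 (mk 1 1 (-1)) by apply/N2mk; exists 1; congr mk; ring.
split; first exact: N2_quandle.
  move/(_ (mk 1 1 (-1))) => [h _]; move: (h q1); rewrite mk0 => /mk_inj [_ _]; lia.
move=> T qT sub u Tu.
have nz : exists u, T u /\ u != 0.
  exists (mk 1 1 (-1)); split; first exact: sub.
  by apply/eqP; rewrite mk0 => /mk_inj [_ _]; lia.
case: (key qT nz) => [H1|H2]; last exact: H2.
case/N1mk: (H1 _ (sub _ q1)) => [/mk_inj [] *|[b /mk_inj [] *]]; lia.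
Qed.

Theorem theorem5p4 :
  forall S : qring 'I_3 -> Prop,
    mq cs4_op S <->
    ((forall u, S u <-> N1 u) \/ (forall u, S u <-> N2 u)).
Proof.
move=> S; split.
  case=> qS nz mx.
  have ne : exists u, S u /\ u != 0.
    case: qS => [[u0 Su0] _ _ dv _].
    case: (eqVneq u0 0) => [e|]; last by eauto.
    exfalso; apply: nz => u; split.
      move=> Su; have [w [_ [-> _]]] := dv u u0 Su Su0.
      by rewrite e mul0r'.
    by move=> ->; rewrite -e.
  case: (key qS ne) => [H1|H2]; [left|right] => u; split.
  - exact: H1.
  - exact: (mx N1 N1_quandle H1).
  - exact: H2.
  - exact: (mx N2 N2_quandle H2).
case=> H.
  have -> : S = N1 by apply: functional_extensionality => u;
    apply: propositional_extensionality.
  exact: mq_N1.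
have -> : S = N2 by apply: functional_extensionality => u;
  apply: propositional_extensionality.
exact: mq_N2.
Qed.
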